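(* Let $R$ be a commutative ring, $S$ a multiplicative subset of $R$, and $E$ an $R$-module. The following are equivalent: (1) $E$ is $u$-$S$-injective; (2) for every short exact sequence $0\to A\xrightarrow{f}B\xrightarrow{g}C\to0$ of $R$-modules, the induced sequence $0\to\mathrm{Hom}_R(C,E)\xrightarrow{g^*}\mathrm{Hom}_R(B,E)\xrightarrow{f^*}\mathrm{Hom}_R(A,E)\to0$ is $u$-$S$-exact; (3) $\mathrm{Ext}^1_R(M,E)$ is $u$-$S$-torsion for every $R$-module $M$; (4) $\mathrm{Ext}^n_R(M,E)$ is $u$-$S$-torsion for every $R$-module $M$ and every $n\ge1$.
   Context: An $R$-module $T$ is $u$-$S$-torsion if $sT=0$ for some $s\in S$. A sequence $M\xrightarrow{f}N\xrightarrow{g}L$ is $u$-$S$-exact at $N$ if there is $s\in S$ with $s\,\mathrm{Ker}(g)\subseteq\mathrm{Im}(f)$ and $s\,\mathrm{Im}(f)\subseteq\mathrm{Ker}(g)$; a short sequence is $u$-$S$-exact if $u$-$S$-exact at every term. $E$ is $u$-$S$-injective if for every $u$-$S$-exact sequence $0\to A\to B\to C\to0$ the induced sequence $0\to\mathrm{Hom}_R(C,E)\to\mathrm{Hom}_R(B,E)\to\mathrm{Hom}_R(A,E)\to0$ is $u$-$S$-exact. *)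

(* Defs.v *)
From HB Require Import structures.
From mathcomp Require Import all_boot all_order all_algebra.
Set Implicit Arguments. Unset Strict Implicit. Unset Printing Implicit Defensive.
Import GRing.Theory.
Local Open Scope ring_scope.

(* R-modules over a commutative ring R are [lmodType R]; R-linear maps are
   [{linear A -> B}]; Hom_R(A,E) is the R-module of such maps with pointwise
   operations (scalar action (s.phi)(x) = s *: phi x). *)

Section UScats.
Variable R : comPzRingType.

Definition mult_subset (S : {pred R}) : Prop :=
  1 \in S /\ forall a b, a \in S -> b \in S -> a * b \in S.

Definition uS_exact_short (S : {pred R}) (A B C : lmodType R)
  (f : {linear A -> B}) (g : {linear B -> C}) : Prop :=
  (* at A : s Ker f \subseteq Im 0 = 0 *)
  (exists2 s, s \in S & forall a, f a = 0 -> s *: a = 0) /\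
  (* at B : s Ker g \subseteq Im f  and  s Im f \subseteq Ker g *)
  (exists2 s, s \in S &
     (forall b, g b = 0 -> exists a, s *: b = f a) /\
     (forall a, g (s *: f a) = 0)) /\
  (* at C : s C = s Ker 0 \subseteq Im g *)
  (exists2 s, s \in S & forall c, exists b, s *: c = g b).

Definition short_exact (A B C : lmodType R)
  (f : {linear A -> B}) (g : {linear B -> C}) : Prop :=
  injective f /\ (forall b, g b = 0 <-> exists a, b = f a) /\
  (forall c, exists b, c = g b).

(* u-S-exactness of 0 -> Hom(C,E) -g^*-> Hom(B,E) -f^*-> Hom(A,E) -> 0,
   where g^* phi = phi o g and f^* psi = psi o f; written out in Hom-modules *)
Definition uS_exact_Hom (S : {pred R}) (E A B C : lmodType R)
  (f : {linear A -> B}) (g : {linear B -> C}) : Prop :=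
  (* at Hom(C,E) : s Ker g^* = 0 *)
  (exists2 s, s \in S & forall phi : {linear C -> E},
      (forall b, phi (g b) = 0) -> forall c, s *: phi c = 0) /\
  (* at Hom(B,E) : s Ker f^* \subseteq Im g^*, s Im g^* \subseteq Ker f^* *)
  (exists2 s, s \in S &
     (forall psi : {linear B -> E}, (forall a, psi (f a) = 0) ->
        exists phi : {linear C -> E}, forall b, s *: psi b = phi (g b)) /\
     (forall (phi : {linear C -> E}) a, s *: phi (g (f a)) = 0)) /\
  (* at Hom(A,E) : s Hom(A,E) \subseteq Im f^* *)
  (exists2 s, s \in S & forall chi : {linear A -> E},
      exists psi : {linear B -> E}, forall a, s *: chi a = psi (f a)).

Definition uS_injective (S : {pred R}) (E : lmodType R) : Prop :=
  forall (A B C : lmodType R) (f : {linear A -> B}) (g : {linear B -> C}),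
    uS_exact_short S f g -> uS_exact_Hom S E f g.

Definition projective (P : lmodType R) : Prop :=
  forall (X Y : lmodType R) (p : {linear X -> Y}) (h : {linear P -> Y}),
    (forall y, exists x, p x = y) ->
    exists k : {linear P -> X}, forall x, p (k x) = h x.

(* projective resolution  ... -> P 2 -d 1-> P 1 -d 0-> P 0 -eps-> M -> 0 *)
Record proj_resolution (M : lmodType R) := ProjRes {
  pr_mod : nat -> lmodType R;
  pr_d : forall n, {linear pr_mod n.+1 -> pr_mod n};
  pr_eps : {linear pr_mod 0 -> M};
  pr_proj : forall n, projective (pr_mod n);
  pr_eps_surj : forall m, exists x, pr_eps x = m;
  pr_exact0 : forall x, pr_eps x = 0 <-> exists y, x = pr_d 0 y;
  pr_exact : forall n x, pr_d n x = 0 <-> exists y, x = pr_d n.+1 y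
}.

(* Ext^{k+1}_R(M,E) = H^{k+1}(Hom_R(P_., E)) = Ker delta^{k+1} / Im delta^k,
   delta^n phi = phi o d_n.  "Ext^{k+1}_R(M,E) is u-S-torsion", i.e.
   s.Ext = 0 for some s in S, means s Ker delta^{k+1} \subseteq Im delta^k.
   Computed with an arbitrary projective resolution of M (the result is
   independent of the resolution up to isomorphism). *)
Definition Ext_uS_torsion (S : {pred R}) (k : nat) (M E : lmodType R) : Prop :=
  forall r : proj_resolution M,
  exists2 s, s \in S &
    forall phi : {linear pr_mod r k.+1 -> E},
      (forall y, phi (pr_d r k.+1 y) = 0) ->
      exists psi : {linear pr_mod r k -> E},
        forall x, s *: phi x = psi (pr_d r k x).

End UScats.

(* Main.v *)
Require Import Defs.
From HB Require Import structures.
From mathcomp Require Import all_boot all_order all_algebra.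
From mathcomp Require Import finmap.
From mathcomp.multinomials Require Import monalg.
From Stdlib Require Import ClassicalEpsilon.
Set Implicit Arguments. Unset Strict Implicit. Unset Printing Implicit Defensive.
Import GRing.Theory.
Local Open Scope fset.
Local Open Scope ring_scope.

Lemma fchoice {A B : Type} (P : A -> B -> Prop) :
  (forall a, exists b, P a b) -> exists f : A -> B, forall a, P a (f a).
Proof.
move=> H; exists (fun a => proj1_sig (constructive_indefinite_description _ (H a))).
by move=> a; exact: proj2_sig.
Qed.

Section S.
Variables (R : comPzRingType) (U V : lmodType R) (f : U -> V) (H : linear f).
Definition mkLin : {linear U -> V} := HB.pack f (GRing.isLinear.Build R U V *:%R f H).
Lemma mkLinE x : mkLin x = f x. Proof. by []. Qed.
End S.

Section Free.
Variables (R : comPzRingType) (K : choiceType).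
Definition fmod := {malg R[K]}.
HB.instance Definition _ := GRing.Zmodule.on fmod.

Definition fscale (c : R) (g : fmod) : fmod := \sum_(k <- msupp g) << c * g@_k *g k >>.

Lemma fscaleE c g k : (fscale c g)@_k = c * g@_k.
Proof.
rewrite /fscale [in RHS](monalgE g) !raddf_sum mulr_sumr.
by apply/eq_bigr=> /= i _; rewrite !mcoeffU mulrnAr.
Qed.

Lemma fscaleA c1 c2 g : fscale c1 (fscale c2 g) = fscale (c1 * c2) g.
Proof. by apply/malgP=> x; rewrite !fscaleE mulrA. Qed.
Lemma fscale1r D: fscale 1 D = D.
Proof. by apply/malgP=> k; rewrite !fscaleE mul1r. Qed.
Lemma fscaleDr c g1 g2 : fscale c (g1 + g2) = fscale c g1 + fscale c g2.
Proof. by apply/malgP=> k; rewrite !(mcoeffD, fscaleE) mulrDr. Qed.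
Lemma fscaleDl g c1 c2: fscale (c1 + c2) g = fscale c1 g + fscale c2 g.
Proof. by apply/malgP=> x; rewrite !(mcoeffD, fscaleE) mulrDl. Qed.

HB.instance Definition _ := GRing.Zmodule_isLmodule.Build R fmod
  fscaleA fscale1r fscaleDr fscaleDl.

Lemma fcoeffZ c (g : fmod) k : (c *: g)@_k = c * g@_k.
Proof. exact: fscaleE. Qed.

Definition bas (k : K) : fmod := << (1 : R) *g k >>.

Lemma fcoeffD (g1 g2 : fmod) k : (g1 + g2)@_k = g1@_k + g2@_k.
Proof. exact: mcoeffD. Qed.

Section Ext.
Variables (V : lmodType R) (phi : K -> V).
Definition extf (g : fmod) : V := \sum_(k <- msupp g) g@_k *: phi k.

Lemma extfw (d : {fset K}) (g : fmod) : msupp g `<=` d ->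
  extf g = \sum_(k <- d) g@_k *: phi k.
Proof.
move=> le; rewrite /extf [LHS](big_fset_incl _ le) => //= x xd /mcoeff_outdom ->.
by rewrite scale0r.
Qed.

Lemma extf_linear : linear extf.
Proof.
move=> a g1 g2.
pose d := msupp g1 `|` msupp g2 `|` msupp (a *: g1 + g2).
have h1 : msupp g1 `<=` d by rewrite /d -fsetUA fsubsetUl.
have h2 : msupp g2 `<=` d by rewrite /d fsetUAC fsubsetUr.
have h3 : msupp (a *: g1 + g2) `<=` d by rewrite /d fsubsetUr.
rewrite (extfw h1) (extfw h2) (extfw h3) scaler_sumr -big_split /=.
apply: eq_bigr => k _; rewrite fcoeffD fcoeffZ scalerDl scalerA //.
Qed.

Definition ext : {linear fmod -> V} := mkLin extf_linear.

Lemma ext_bas k : ext (bas k) = phi k.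
Proof.
rewrite /= (@extfw [fset k]) /bas; last exact: msuppU_le.
by rewrite big_seq_fset1 mcoeffUU scale1r.
Qed.
End Ext.

Lemma free_decomp (g : fmod) : g = \sum_(k <- msupp g) g@_k *: bas k.
Proof.
rewrite {1}[g]monalgE; apply: eq_bigr => k _.
apply/malgP => k'; rewrite fcoeffZ /bas !mcoeffU mulrnAr mulr1 //.
Qed.

Lemma lin_ext (V : lmodType R) (L1 L2 : {linear fmod -> V}) :
  (forall k, L1 (bas k) = L2 (bas k)) -> forall g, L1 g = L2 g.
Proof.
move=> E g; rewrite (free_decomp g) !linear_sum; apply: eq_bigr => k _.
by rewrite !linearZZ E.
Qed.

Lemma ext_comp (V W : lmodType R) (phi : K -> V) (L : {linear V -> W}) g :
  L (ext phi g) = ext (fun k => L (phi k)) g.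
Proof.
rewrite (free_decomp g) (linear_sum (ext phi)) (linear_sum L) (linear_sum (ext _)).
apply: eq_bigr => k _.
by rewrite !linearZZ !ext_bas.
Qed.

End Free.

Section Ker.
Variables (R : comPzRingType) (U V : lmodType R) (h : {linear U -> V}).
Definition kerp : {pred U} := fun x => h x == 0.
Lemma kerp_closed : GRing.submod_closed kerp.
Proof.
split; first by rewrite /kerp unfold_in /= linear0.
by move=> a u v; rewrite /kerp !unfold_in /= linearP => /eqP -> /eqP ->; rewrite scaler0 addr0.
Qed.
HB.instance Definition _ := GRing.isSubmodClosed.Build R U kerp kerp_closed.
Definition kerT := {x : U | x \in kerp}.
HB.instance Definition _ := SubChoice.on kerT.
HB.instance Definition _ := [SubChoice_isSubLmodule of kerT by <:].
Definition kval (x : kerT) : U := sval x.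
Lemma kval_linear : linear kval. Proof. by move=> a x y. Qed.
Lemma kvalP (x : kerT) : h (kval x) = 0.
Proof. by case: x => x /= /eqP. Qed.
End Ker.

Section More.
Variables (R : comPzRingType).

Lemma ext_eq (K : choiceType) (V : lmodType R) (phi psi : K -> V) :
  (forall k, phi k = psi k) -> forall g, ext phi g = ext psi g.
Proof. by move=> E; apply: lin_ext => k; rewrite !ext_bas. Qed.

Lemma ext_scale (K : choiceType) (V : lmodType R) (phi : K -> V) (s : R) g :
  ext (fun k => s *: phi k) g = s *: ext phi g.
Proof.
rewrite !mkLinE /extf scaler_sumr; apply: eq_bigr => k _.
by rewrite !scalerA mulrC.
Qed.

Lemma ext0 (K : choiceType) (V : lmodType R) g :
  ext (fun _ : K => (0 : V)) g = 0.
Proof. by rewrite mkLinE /extf big1 // => k _; rewrite scaler0. Qed.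

Lemma free_proj (K : choiceType) : projective (fmod R K).
Proof.
move=> X Y p h surj.
have [xs Hxs] := @fchoice _ _ (fun (k : K) x => p x = h (bas R k)) (fun k => surj (h (bas R k))).
exists (ext xs) => x; rewrite ext_comp.
have -> : ext (fun k => p (xs k)) x = ext (fun k => h (bas R k)) x by apply: ext_eq.
by move: x; apply: lin_ext => k; rewrite !ext_bas.
Qed.

Lemma quot_lin (B X E : lmodType R) (Rel : B -> X -> Prop) (F : X -> E) :
  (forall r x y, F (r *: x + y) = r *: F x + F y) ->
  (forall b, exists x, Rel b x) ->
  (forall r b b' x x', Rel b x -> Rel b' x' -> Rel (r *: b + b') (r *: x + x')) ->
  (forall b x x', Rel b x -> Rel b x' -> F x = F x') ->
  exists L : {linear B -> E}, forall b x, Rel b x -> L b = F x.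
Proof.
move=> Flin tot comp wd.
have [w Hw] := @fchoice _ _ Rel tot.
have Llin : linear (fun b => F (w b)).
  move=> r b b'; rewrite -Flin; apply: wd; first exact: Hw.
  by apply: comp; apply: Hw.
exists (mkLin Llin) => b x Hb; rewrite mkLinE; exact: wd (Hw b) Hb.
Qed.

Definition stageT := {P : lmodType R & {Q : lmodType R & {linear P -> Q}}}.
Definition next (r : stageT) : stageT :=
  @existT (lmodType R) _ (fmod R (kerT (projT2 (projT2 r))) : lmodType R)
    (existT _ (projT1 r) (ext (@kval _ _ _ (projT2 (projT2 r))))).
Definition stage0 (M : lmodType R) : stageT :=
  @existT (lmodType R) _ (fmod R M : lmodType R) (existT _ M (ext (fun m : M => m))).
Fixpoint stage (M : lmodType R) (n : nat) : stageT :=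
  match n with 0 => stage0 M | n'.+1 => next (stage M n') end.
Definition pm M n : lmodType R := projT1 (stage M n).
Definition pd M n : {linear pm M n.+1 -> pm M n} := projT2 (projT2 (stage M n.+1)).
Definition peps M : {linear pm M 0 -> M} := projT2 (projT2 (stage M 0)).

Lemma step_exact (P Q : lmodType R) (d : {linear P -> Q}) (x : P) :
  d x = 0 <-> exists y, x = ext (@kval _ _ _ d) y.
Proof.
split.
  move=> dx; have kx : x \in kerp d by rewrite unfold_in /kerp dx.
  exists (bas R (exist _ x kx)); by rewrite ext_bas.
move=> [y ->]; rewrite ext_comp.
rewrite (ext_eq (psi := fun _ => 0)); first exact: ext0.
by move=> k; rewrite kvalP.
Qed.

Lemma pm_proj M n : projective (pm M n).
Proof. case: n => [|n]; exact: free_proj. Qed.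

Definition myres (M : lmodType R) : proj_resolution M.
Proof.
refine (@ProjRes R M (pm M) (pd M) (peps M) (@pm_proj M) _ _ _).
- by move=> m; apply: (ex_intro _ (bas R m)); exact: ext_bas.
- move=> x; exact: (step_exact (peps M) x).
- move=> n x; exact: (step_exact (pd M n) x).
Defined.

End More.

Section Main.
Variable R : comPzRingType.

Lemma T1 (S : {pred R}) (A B C : lmodType R) (f : {linear A -> B}) (g : {linear B -> C}) :
  1 \in S -> short_exact f g -> uS_exact_short S f g.
Proof.
move=> S1 [finj [ex surj]]; split; [|split].
- exists 1 => // a fa; rewrite scale1r; apply: finj; by rewrite fa linear0.
- exists 1 => //; split.
  + move=> b /ex [a ->]; exists a; by rewrite scale1r.
  + move=> a; rewrite scale1r; apply/ex; by exists a.
- exists 1 => // c; have [b ->] := surj c; exists b; by rewrite scale1r.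
Qed.

Lemma T2 (S : {pred R}) (E : lmodType R) :
  (forall (A B C : lmodType R) (f : {linear A -> B}) (g : {linear B -> C}),
     short_exact f g -> uS_exact_Hom S E f g) ->
  forall M, Ext_uS_torsion S 0 M E.
Proof.
move=> H M r.
pose f : {linear kerT (pr_eps r) -> pr_mod r 0} := mkLin (@kval_linear _ _ _ (pr_eps r)).
have se : short_exact f (pr_eps r).
  split; [|split].
  - move=> x y /= E'; apply: val_inj; exact E'.
  - move=> b; split.
      move=> eb; have kb : b \in kerp (pr_eps r) by rewrite unfold_in /kerp eb.
      by exists (exist _ b kb).
    move=> [a ->]; exact: kvalP.
  - move=> c; have [x <-] := pr_eps_surj r c; by exists x.
have [_ [_ [s Hs H3]]] := H _ _ _ _ _ se.
exists s => // phi Hphi.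
have [chi Hchi] : exists L : {linear kerT (pr_eps r) -> E},
    forall a y, kval a = pr_d r 0 y -> L a = phi y.
  apply: (@quot_lin _ _ _ _ (fun a y => kval a = pr_d r 0 y) phi).
  - by move=> a x y; rewrite linearP.
  - move=> a; have [y ->] := (@pr_exact0 _ _ r (kval a)).1 (kvalP a); by exists y.
  - by move=> a b b' x x' Hb Hb'; rewrite linearP -Hb -Hb'.
  - move=> a x x' Hx Hx'; apply/eqP; rewrite -subr_eq0 -linearB.
    have hz : pr_d r 0 (x - x') = 0 by rewrite linearB -Hx -Hx' subrr.
    have [z ->] := (@pr_exact _ _ r 0 (x - x')).1 hz.
    by rewrite Hphi.
have [psi Hpsi] := H3 chi.
exists psi => x.
have dk : pr_d r 0 x \in kerp (pr_eps r).
  by rewrite unfold_in /kerp; apply/eqP; apply/(@pr_exact0 _ _ r _).2; exists x.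
by rewrite -(Hchi (exist (fun y => y \in kerp (pr_eps r)) _ dk) x erefl) Hpsi.
Qed.


Lemma T4 (S : {pred R}) (E : lmodType R) (k : nat) :
  (forall M, Ext_uS_torsion S k M E) -> forall M, Ext_uS_torsion S k.+1 M E.
Proof.
move=> H M r.
have dk : forall x, pr_d r 0 x \in kerp (pr_eps r).
  by move=> x; rewrite unfold_in /kerp; apply/eqP; apply/(@pr_exact0 _ _ r _).2; exists x.
pose e := fun x => (exist (fun y => y \in kerp (pr_eps r)) (pr_d r 0 x) (dk x) : kerT (pr_eps r)).
have el : linear e.
  by move=> a x y; apply: val_inj => /=; rewrite linearP.
have hs : forall m : kerT (pr_eps r), exists x, mkLin el x = m.
  move=> [x px]; have px' : pr_eps r x = 0 by move: px; rewrite unfold_in /kerp => /eqP.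
  have [y hy] := (@pr_exact0 _ _ r x).1 px'.
  by exists y; apply: val_inj => /=; rewrite hy.
have h0 : forall x, mkLin el x = 0 <-> exists y, x = pr_d r 1 y.
  move=> x; rewrite mkLinE; split.
    by move=> /(congr1 val) /= hx; apply/(@pr_exact _ _ r 0 x).1.
  move=> hx; apply: val_inj => /=; exact/(@pr_exact _ _ r 0 x).2.
have hn : forall n x, pr_d r n.+1 x = 0 <-> exists y, x = pr_d r n.+2 y.
  by move=> n x; exact: (@pr_exact _ _ r n.+1 x).
pose r' := @ProjRes R (kerT (pr_eps r)) (fun n => pr_mod r n.+1) (fun n => pr_d r n.+1)
   (mkLin el) (fun n => @pr_proj _ _ r n.+1) hs h0 hn.
have [s Hs Hr] := H _ r'.
by exists s.
Qed.

End Main.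

Section Main3.
Variable R : comPzRingType.
Lemma auxA (V : lmodType R) (a c d : R) (b b' u1 u2 : V) :
  c *: (d *: (a *: b + b') - (a *: u1 + u2)) = a *: (c *: (d *: b - u1)) + c *: (d *: b' - u2).
Proof.
rewrite [in RHS]scalerA [a * c]mulrC -scalerA -scalerDr; congr (_ *: _).
by rewrite scalerDr scalerBr !scalerA [d * a]mulrC opprD addrACA.
Qed.
Lemma auxB (V : lmodType R) (c : R) (w u1 u2 : V) :
  c *: (w - u1) - c *: (w - u2) + c *: (u1 - u2) = 0.
Proof.
rewrite -!scalerBr -scalerDr.
have -> : w - u1 - (w - u2) + (u1 - u2) = 0.
  by rewrite opprB [u2 - w]addrC addrACA subrK addrK subrr.
by rewrite scaler0.
Qed.
Lemma auxC (V : lmodType R) (a t : R) (X1 X2 P1 P2 : V) :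
  t *: (a *: X1 + X2) + (a *: P1 + P2) = a *: (t *: X1 + P1) + (t *: X2 + P2).
Proof. by rewrite !scalerDr !scalerA [t * a]mulrC addrACA. Qed.

Lemma T3 (S : {pred R}) (E : lmodType R) :
  mult_subset S -> (forall M, Ext_uS_torsion S 0 M E) -> uS_injective S E.
Proof.
move=> [S1 SM] Hext A B C f g [[s1 Hs1 h1] [[s2 Hs2 [h2a h2b]] [s3 Hs3 h3]]].
split; [|split].
- exists s3 => // phi Hphi c; have [b Hb] := h3 c.
  by rewrite -linearZZ Hb Hphi.
- exists (s2 * s3); first exact: SM.
  split.
  + move=> psi Hpsi.
    have [phi Hphi] : exists L : {linear C -> E},
        forall c b, s3 *: c = g b -> L c = s2 *: psi b.
      apply: (@quot_lin _ _ _ _ (fun c b => s3 *: c = g b) (fun b => s2 *: psi b)).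
      * by move=> a x y; rewrite linearP scalerDr !scalerA mulrC.
      * by move=> c; have [b Hb] := h3 c; exists b.
      * by move=> a c c' b b' Hb Hb'; rewrite linearP -Hb -Hb' scalerDr !scalerA mulrC.
      * move=> c b b' Hb Hb'.
        have hz : g (b - b') = 0 by rewrite linearB -Hb -Hb' subrr.
        have [a Ha] := h2a _ hz.
        by apply/eqP; rewrite -subr_eq0 -scalerBr -linearB -linearZZ Ha Hpsi.
    exists phi => b.
    rewrite (Hphi (g b) (s3 *: b)); last by rewrite (linearZZ g).
    by rewrite (linearZZ psi) scalerA.
  + move=> phi a.
    by rewrite mulrC -scalerA -(linearZZ phi) -(linearZZ g) h2b linear0 scaler0.
- pose r := myres C.
  have [t Ht Hcoc] := Hext C r.
  exists (t * (s1 * (s2 * s3 * s2))); first by apply: (SM) => //; apply: (SM) => //; apply: (SM) => //; apply: (SM).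
  move=> chi.
  have [bs Hbs] := @fchoice _ _ (fun c b => s3 *: c = g b) h3.
  pose a0 : {linear pm C 0 -> B} := ext bs.
  have Ha0 : forall x, g (a0 x) = s3 *: peps C x.
    move=> x; rewrite /a0 ext_comp /peps /= -ext_scale; apply: ext_eq => c.
    by rewrite Hbs.
  have Has : forall k : kerT (peps C), exists a, s2 *: a0 (kval k) = f a.
    by move=> k; apply: h2a; rewrite Ha0 kvalP scaler0.
  have [as_ Has'] := fchoice Has.
  pose a1 : {linear pm C 1 -> A} := ext as_.
  have Ha1 : forall y, f (a1 y) = s2 *: a0 (pd C 0 y).
    move=> y; have -> : pd C 0 y = ext (@kval _ _ _ (peps C)) y by [].
    rewrite /a1 ext_comp (ext_comp as_ f) -ext_scale; apply: ext_eq => k.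
    by rewrite Has'.
  pose phi : {linear pm C 1 -> E} := ext (fun k => chi (s1 *: as_ k)).
  have Hphi : forall y, phi y = chi (s1 *: a1 y).
    move=> y; rewrite (linearZZ chi) /a1 ext_comp -ext_scale; apply: ext_eq => k.
    by rewrite (linearZZ chi).
  have Hc : forall z, phi (pd C 1 z) = 0.
    move=> z; rewrite Hphi.
    have : f (a1 (pd C 1 z)) = 0.
      rewrite Ha1.
      have -> : pd C 0 (pd C 1 z) = 0 by apply/(step_exact (pd C 0) (pd C 1 z)).2; exists z.
      by rewrite linear0 scaler0.
    by move/h1 => ->; rewrite linear0.
  have [psi0 Hpsi0] := Hcoc phi Hc.
  pose Rel := fun (b : B) (p : (pm C 0 * A)%type) =>
    peps C p.1 = g b /\ s2 *: (s3 *: b - a0 p.1) = f p.2.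
  pose F := fun (p : (pm C 0 * A)%type) => t *: chi (s1 *: p.2) + psi0 p.1.
  have [Psi HPsi] : exists L : {linear B -> E}, forall b p, Rel b p -> L b = F p.
    apply: (@quot_lin _ B (pm C 0 * A)%type E Rel F).
    - move=> a p q; rewrite /F.
      have -> : (a *: p + q).1 = a *: p.1 + q.1 by [].
      have -> : (a *: p + q).2 = a *: p.2 + q.2 by [].
      rewrite scalerDr (linearD chi) (linearP psi0).
      have -> : s1 *: (a *: p.2) = a *: (s1 *: p.2) by rewrite !scalerA mulrC.
      rewrite [chi (a *: _)]linearZZ; exact: auxC.
    - move=> b.
      have Hk : g (s3 *: b - a0 (bas R (g b))) = 0.
        by rewrite linearB Ha0 (linearZZ g) ext_bas subrr.
      have [a Ha] := h2a _ Hk.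
      exists (bas R (g b), a); split => //=; exact: ext_bas.
    - move=> a b b' p q [E1 E2] [E3 E4]; rewrite /Rel.
      have -> : (a *: p + q).1 = a *: p.1 + q.1 by [].
      have -> : (a *: p + q).2 = a *: p.2 + q.2 by [].
      split; first by rewrite (linearP (peps C)) E1 E3 (linearP g).
      rewrite (linearP f) -E2 -E4 (linearP a0); exact: auxA.
    - move=> b [x1 y1] [x2 y2] [E1 E2] [E3 E4].
      change (peps C x1 = g b) in E1. change (peps C x2 = g b) in E3.
      change (s2 *: (s3 *: b - a0 x1) = f y1) in E2.
      change (s2 *: (s3 *: b - a0 x2) = f y2) in E4.
      have hk : x1 - x2 \in kerp (peps C) by rewrite unfold_in /kerp linearB E1 E3 subrr.
      pose y : pm C 1 := bas R (exist (fun z => z \in kerp (peps C)) _ hk).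
      have Hy : pd C 0 y = x1 - x2 by exact: ext_bas.
      have : f (y1 - y2 + a1 y) = 0.
        rewrite linearD linearB -E2 -E4 Ha1 Hy (linearB a0); exact: auxB.
      move/h1 => H0.
      have e1 : psi0 x1 - psi0 x2 = t *: chi (s1 *: a1 y).
        by rewrite -linearB -Hy -Hphi; symmetry; exact: Hpsi0.
      have e2 : chi (s1 *: y1) - chi (s1 *: y2) + chi (s1 *: a1 y) = 0.
        by rewrite -(linearB chi) -(linearD chi) -scalerBr -scalerDr H0 linear0.
      apply/eqP; rewrite /F /= -subr_eq0 opprD addrACA e1 -scalerBr -scalerDr e2 scaler0 //.
  have Plin : linear (fun b => s2 *: Psi b).
    by move=> a b b'; rewrite linearP scalerDr !scalerA mulrC.
  exists (mkLin Plin) => a; rewrite mkLinE -(linearZZ Psi).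
  rewrite (HPsi _ (0, (s2 * s3 * s2) *: a)).
    rewrite /F /= (_ : psi0 _ = 0) ?addr0; last exact: linear0.
    by rewrite !(linearZZ chi) !scalerA !mulrA.
  split; first by rewrite h2b; exact: linear0.
  rewrite (_ : a0 _ = 0) ?subr0; last exact: linear0.
  by rewrite !(linearZZ f) !scalerA.
Qed.
End Main3.

Local Close Scope fset_scope.
Unset Implicit Arguments.

Theorem theorem4p3 (R : comPzRingType) (S : {pred R}) (E : lmodType R) :
  mult_subset S ->
  [/\ (uS_injective S E <->
        forall (A B C : lmodType R) (f : {linear A -> B}) (g : {linear B -> C}),
          short_exact f g -> uS_exact_Hom S E f g),
      (uS_injective S E <-> forall M : lmodType R, Ext_uS_torsion S 0 M E) &
      (uS_injective S E <->
        forall (M : lmodType R) (n : nat), (1 <= n)%N -> Ext_uS_torsion S n.-1 M E)].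
Proof.
move=> HS; have [S1 SM] := HS.
have i12 : uS_injective S E -> forall (A B C : lmodType R) (f : {linear A -> B})
    (g : {linear B -> C}), short_exact f g -> uS_exact_Hom S E f g.
  by move=> H A B C f g se; apply: H; exact: T1.
have i13 : uS_injective S E -> forall M : lmodType R, Ext_uS_torsion S 0 M E.
  by move=> H; apply: T2; exact: i12.
split.
- split; first exact: i12.
  by move=> H; apply: (T3 HS); exact: T2.
- split; first exact: i13.
  exact: T3.
- split.
  + move=> H M n _.
    have Hall : forall k (M : lmodType R), Ext_uS_torsion S k M E.
      elim=> [|k IH]; first exact: i13.
      exact: T4.
    exact: Hall.
  + by move=> H; apply: (T3 HS) => M; exact: (H M 1%N).
Qed.
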